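(* Let $S$ be a bottomed linearly ordered set with $\omega_0\le\chi(S)$. Define $I\colon S\to\mathbb{H}(S)$ by $I(s)=e_{\mathcal{H}((S^* )^{\mathrm{op}}),\,W_S(s)}$ if $\perp_S<s$ and $I(\perp_S)=0$. Then $I$ is an isotone embedding (injective and order preserving) whose image is a g-characteristic subset of the linearly ordered Abelian group $\mathbb{H}(S)$, i.e. $0$ lies in the image and for every $f\in\mathbb{H}(S)$ with $f>0$ there exists $s\in S^*$ with $0<I(s)<f$.
   Context: A bottomed linearly ordered set $S$ has a least element $\perp_S$; $S^*=S\setminus\{\perp_S\}$. The character $\chi(S)$ is the least cardinal $\kappa>0$ such that some strictly decreasing family $(s_\alpha)_{\alpha<\kappa}$ in $S^*$ has every $t\in S^*$ bounded below by some $s_\alpha$. For a linearly ordered set $L$, $L^{\mathrm{op}}$ is $L$ with the reversed order. A subset of $L$ is dually well-ordered if each of its non-empty subsets has a maximum. The Hahn group $\mathcal{H}(L)$ is the set of maps $f\colon L\to\mathbb{R}$ whose support $\{x:f(x)\ne0\}$ is dually well-ordered, with pointwise addition and order $f<g$ iff $f\neq g$ and $f(\theta)<g(\theta)$ where $\theta=\max\{x:f(x)\ne g(x)\}$; it is a linearly ordered Abelian group. For $s\in L$, $e_{L,s}\in\mathcal{H}(L)$ is the function with $e_{L,s}(s)=1$ and $e_{L,s}(x)=0$ for $x\ne s$. For a linearly ordered Abelian group $G$, the Hahn field $\mathcal{H}(G)$ is the Hahn group with the product $(fg)(x)=\sum_{a+b=x}f(a)g(b)$. Define $\mathbb{H}(S)$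 to be the Hahn field of the linearly ordered Abelian group $\mathcal{H}((S^* )^{\mathrm{op}})$, and $W_S\colon S^*\to\mathcal{H}((S^* )^{\mathrm{op}})$ by $W_S(s)=-e_{(S^* )^{\mathrm{op}},s}$. *)

(* Defs.v *)
From mathcomp Require Import all_boot all_order.
From Stdlib Require Import Reals Lra Classical ClassicalEpsilon.
Import Order.TTheory.

Set Implicit Arguments.
Unset Strict Implicit.
Unset Printing Implicit Defensive.

Definition rle (T : Type) (lt : T -> T -> Prop) (x y : T) : Prop := x = y \/ lt x y.

Definition dually_wo (T : Type) (lt : T -> T -> Prop) (A : T -> Prop) : Prop :=
  forall B : T -> Prop, (forall x, B x -> A x) -> (exists x, B x) ->
    exists m, B m /\ forall x, B x -> rle lt x m.

Record hahn (T : Type) (lt : T -> T -> Prop) := Hahn {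
  hfun :> T -> R;
  hsupp : dually_wo lt (fun x => hfun x <> R0) }.

(* f < g iff f <> g and f(theta) < g(theta) where theta = max{x | f x <> g x};
   unfolded: theta is a point with f theta < g theta above which f and g agree. *)
Definition hahn_lt (T : Type) (lt : T -> T -> Prop) (f g : hahn lt) : Prop :=
  exists theta, Rlt (f theta) (g theta) /\ forall x, lt theta x -> f x = g x.

Definition hahn_le (T : Type) (lt : T -> T -> Prop) (f g : hahn lt) : Prop :=
  f = g \/ hahn_lt f g.

Lemma dwo_empty (T : Type) (lt : T -> T -> Prop) :
  dually_wo lt (fun x : T => R0 <> R0).
Proof. move=> B HB [x Bx]; by case: (HB x Bx). Qed.

Definition hahn0 (T : Type) (lt : T -> T -> Prop) : hahn lt :=
  @Hahn T lt (fun _ => R0) (@dwo_empty T lt).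

Lemma dwo_opp (T : Type) (lt : T -> T -> Prop) (f : hahn lt) :
  dually_wo lt (fun x => Ropp (f x) <> R0).
Proof.
move=> B HB Bne; apply: (@hsupp T lt f B) => //.
move=> x Bx E; apply: (HB x Bx); rewrite E; lra.
Qed.

Definition hahn_opp (T : Type) (lt : T -> T -> Prop) (f : hahn lt) : hahn lt :=
  @Hahn T lt (fun x => Ropp (f x)) (@dwo_opp T lt f).

Definition ind_fun (T : Type) (s : T) : T -> R :=
  fun x => if excluded_middle_informative (x = s) then R1 else R0.

Lemma dwo_ind (T : Type) (lt : T -> T -> Prop) (s : T) :
  dually_wo lt (fun x => ind_fun s x <> R0).
Proof.
move=> B HB [y By]; exists s.
have supp x : B x -> x = s.
  move=> /HB; rewrite /ind_fun; case: excluded_middle_informative => //.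
by rewrite -(supp y By); split => // x /supp ->; rewrite (supp y By); left.
Qed.

Definition hahn_e (T : Type) (lt : T -> T -> Prop) (s : T) : hahn lt :=
  @Hahn T lt (ind_fun s) (@dwo_ind T lt s).

Section Construction.
Context {d : Order.disp_t} (S : bOrderType d).

Definition Sstar : Type := {s : S | (\bot < s)%O}.

Definition Sstar_op_lt (x y : Sstar) : Prop := (val y < val x)%O.

Definition GS : Type := hahn Sstar_op_lt.
Definition GS_lt : GS -> GS -> Prop := @hahn_lt Sstar Sstar_op_lt.

(* underlying ordered group of the Hahn field HH(S) = H(H((S^ * )^op)); the field
   multiplication plays no role in the statement *)
Definition HH : Type := hahn GS_lt.
Definition HH_lt : HH -> HH -> Prop := @hahn_lt GS GS_lt.
Definition HH_le : HH -> HH -> Prop := @hahn_le GS GS_lt.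
Definition HH0 : HH := @hahn0 GS GS_lt.

Definition W_S (s : Sstar) : GS := hahn_opp (@hahn_e Sstar Sstar_op_lt s).

Definition I_S (s : S) : HH :=
  match insub s with
  | Some x => @hahn_e GS GS_lt (W_S x)
  | None => HH0
  end.

Definition coinitial_decr_family (n : nat) (f : nat -> S) : Prop :=
  (forall i, (i < n)%N -> (\bot < f i)%O) /\
  (forall i j, (i < j < n)%N -> (f j < f i)%O) /\
  (forall t : S, (\bot < t)%O -> exists i, (i < n)%N /\ (f i <= t)%O).

(* omega_0 <= chi(S): chi(S) is defined (S^ * non-empty) and no finite (nonzero)
   cardinal admits such a family. *)
Definition chi_ge_omega0 : Prop :=
  (exists t : S, (\bot < t)%O) /\
  forall (n : nat) (f : nat -> S), (0 < n)%N -> ~ coinitial_decr_family n f.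

End Construction.

(* Main.v *)
Require Import Defs.
From mathcomp Require Import all_boot all_order.
From Stdlib Require Import Reals Lra Classical ClassicalEpsilon.
Import Order.TTheory.

Set Implicit Arguments.
Unset Strict Implicit.
Unset Printing Implicit Defensive.

Lemma hahn_lt_irr T (lt : T -> T -> Prop) (f : hahn lt) : ~ hahn_lt f f.
Proof. by case=> th [/Rlt_irrefl]. Qed.

Lemma hahn_lt_asym T (lt : T -> T -> Prop)
  (tri : forall a b, a = b \/ lt a b \/ lt b a) (f g : hahn lt) :
  hahn_lt f g -> hahn_lt g f -> False.
Proof.
case=> t1 [h1 e1] [t2 [h2 e2]].
case: (tri t1 t2) => [E|[L|L]].
- subst t2; lra.
- rewrite (e1 _ L) in h2; lra.
- rewrite (e2 _ L) in h1; lra.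
Qed.

Lemma ind_self T (s : T) : ind_fun s s = R1.
Proof. by rewrite /ind_fun; case: excluded_middle_informative. Qed.

Lemma ind_neq T (s x : T) : x <> s -> ind_fun s x = R0.
Proof. by rewrite /ind_fun; case: excluded_middle_informative. Qed.

Section S.
Context {d : Order.disp_t} (S : bOrderType d).
Local Open Scope order_scope.

Lemma op_tri : forall a b : Sstar S, a = b \/ Sstar_op_lt a b \/ Sstar_op_lt b a.
Proof.
move=> a b; rewrite /Sstar_op_lt.
case: (ltgtP (val a) (val b)) => H.
- by right; right.
- by right; left.
- by left; apply: val_inj.
Qed.

Lemma GS_asym (f g : GS S) : GS_lt f g -> GS_lt g f -> False.
Proof. exact: (hahn_lt_asym op_tri). Qed.

Lemma W_mono (a b : Sstar S) : (val a < val b)%O -> GS_lt (W_S a) (W_S b).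
Proof.
move=> ab; exists a => /=; split.
  rewrite ind_self ind_neq; first lra.
  by move=> E; subst; rewrite ltxx in ab.
move=> x; rewrite /Sstar_op_lt => xa.
rewrite !ind_neq //.
- by move=> E; rewrite E in xa; have := lt_trans ab xa; rewrite ltxx.
- by move=> E; subst; rewrite ltxx in xa.
Qed.

Lemma e_mono (a b : GS S) : GS_lt a b ->
  HH_lt (@hahn_e (GS S) (@GS_lt d S) a) (@hahn_e (GS S) (@GS_lt d S) b).
Proof.
move=> ab; exists b => /=; split.
  rewrite ind_self ind_neq; first lra.
  by move=> E; subst; apply: (hahn_lt_irr ab).
move=> x bx; rewrite !ind_neq //.
- by move=> E; subst; apply: (hahn_lt_irr bx).
- by move=> E; subst; apply: (GS_asym ab bx).
Qed.

Lemma e_pos (b : GS S) : HH_lt (HH0 S) (@hahn_e (GS S) (@GS_lt d S) b).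
Proof.
exists b => /=; split.
  rewrite ind_self; lra.
move=> x bx; rewrite ind_neq //.
by move=> E; subst; apply: (hahn_lt_irr bx).
Qed.

Lemma I_pos (s : S) (h : (\bot < s)%O) :
  I_S s = @hahn_e (GS S) (@GS_lt d S) (W_S (exist _ s h)).
Proof. by rewrite /I_S insubT. Qed.

Lemma I_bot : I_S (\bot : S) = HH0 S.
Proof. by rewrite /I_S insubF // ltxx. Qed.

Lemma below (chi : chi_ge_omega0 S) (theta : GS S) :
  exists a : Sstar S, GS_lt (W_S a) theta.
Proof.
case: (classic (exists x, theta x <> R0)) => [[x0 hx0]|N].
- have [m [Bm Mm]] := @hsupp _ _ theta (fun x => theta x <> R0) (fun x h => h)
    (ex_intro _ x0 hx0).
  have [t [ht1 ht2]] : exists t : S, (\bot < t)%O /\ (t < val m)%O.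
    apply: NNPP => N.
    apply: (chi.2 1%N (fun _ => val m) isT).
    split; first by move=> i _; exact: (valP m).
    split; first by move=> i j /andP[]; case: j => [|j] //; case: i.
    move=> t ht; exists 0%N; split => //.
    rewrite leNgt; apply/negP => L; apply: N; exists t; split => //.
  have Z x : (val x < val m)%O -> theta x = R0.
    move=> L; apply: NNPP => nz; case: (Mm x nz) => [E|L'].
    + by subst; rewrite ltxx in L.
    + by rewrite /Sstar_op_lt in L'; have := lt_trans L' L; rewrite ltxx.
  exists (exist _ t ht1); exists (exist _ t ht1) => /=; split.
    rewrite ind_self Z //; lra.
  move=> x; rewrite /Sstar_op_lt /= => xt.
  rewrite ind_neq; last by move=> E; subst; rewrite ltxx in xt.
  rewrite Z; [lra | exact: lt_trans xt ht2].
- have Z x : theta x = R0 by apply: NNPP => nz; apply: N; exists x.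
  case: chi.1 => t ht.
  exists (exist _ t ht); exists (exist _ t ht) => /=; split.
    rewrite ind_self Z; lra.
  move=> x; rewrite /Sstar_op_lt /= => xt.
  rewrite ind_neq; last by move=> E; subst; rewrite ltxx in xt.
  rewrite Z; lra.
Qed.

End S.

Theorem proposition2p24 {d : Order.disp_t} (S : bOrderType d) :
  chi_ge_omega0 S ->
  injective (@I_S d S) /\
  (forall s t : S, (s <= t)%O -> HH_le (I_S s) (I_S t)) /\
  (exists s : S, I_S s = HH0 S) /\
  (forall f : HH S, HH_lt (HH0 S) f ->
     exists s : S, (\bot < s)%O /\ HH_lt (HH0 S) (I_S s) /\ HH_lt (I_S s) f).
Proof.
move=> chi.
have smono : forall s t : S, (s < t)%O -> HH_lt (I_S s) (I_S t).
  move=> s t st.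
  have ht : (\bot < t)%O by apply: le_lt_trans st; exact: le0x.
  rewrite (I_pos ht).
  case: (eqVneq s \bot%O) => [->|nb].
    by rewrite I_bot; apply: e_pos.
  have hs : (\bot < s)%O by rewrite lt_neqAle eq_sym nb le0x.
  by rewrite (I_pos hs); apply: e_mono; apply: W_mono.
split.
  move=> s t E; case: (ltgtP s t) => // L.
  - by have := smono _ _ L; rewrite E => /hahn_lt_irr.
  - by have := smono _ _ L; rewrite E => /hahn_lt_irr.
split.
  move=> s t; rewrite le_eqVlt => /orP[/eqP->|L]; [by left | by right; apply: smono].
split; first by exists \bot%O; apply: I_bot.
move=> f [theta [h0 e0]].
have [a aL] := below chi theta.
exists (val a); have ha := valP a.
split => //.
have -> : I_S (val a) = @hahn_e (GS S) (@GS_lt d S) (W_S a).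
  by rewrite (I_pos ha); congr (hahn_e _ (W_S _)); apply: val_inj.
split; first exact: e_pos.
exists theta => /=; split.
  rewrite ind_neq; first by [].
  by move=> E; subst; apply: (hahn_lt_irr aL).
move=> x tx; rewrite -(e0 _ tx) /= ind_neq //.
by move=> E; subst; apply: (GS_asym aL tx).
Qed.
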